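(* Let $Q$ be an induced path in a graph $G$ and let $H_1,H_2$ be two Tutte bridges of $V(Q)$ in $G$ such that $|V(H_i)\cap V(Q)|=2$ for each $i\in\{1,2\}$, and such that $Q_1$ and $Q_2$ share at least one edge, where $Q_i$ denotes the minimal subpath of $Q$ containing $V(H_i)\cap V(Q)$. Then $G[V(H_1)\cup V(H_2)\cup V(Q_1)\cup V(Q_2)]$ contains an induced subdivision of the diamond.
   Context: All graphs are finite and simple. The diamond is $K_4$ minus one edge. An induced subdivision of a graph $H$ in $G$ is an induced subgraph of $G$ isomorphic to a graph obtained from $H$ by repeatedly replacing edges by paths of length $2$ through new vertices. For $A\subseteq V(G)$, a Tutte bridge of $A$ in $G$ is the subgraph of $G$ consisting of one connected component $K$ of $G-A$, together with all edges joining $K$ to $A$ and all vertices of $A$ incident with those edges. *)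

(* Defs.v *)
From mathcomp Require Import all_boot.
Set Implicit Arguments. Unset Strict Implicit. Unset Printing Implicit Defensive.

Section Graphs.
Variables (T : finType) (e : rel T).

Definition simple_graph : Prop := symmetric e /\ irreflexive e.

Definition induced_path (Q : seq T) : Prop :=
  uniq Q /\
  forall x y, x \in Q -> y \in Q ->
    e x y = ((index x Q).+1 == index y Q) || ((index y Q).+1 == index x Q).

Definition component_of_complement (A : {set T}) (K : {set T}) : Prop :=
  [/\ K != set0, [disjoint K & A],
      (forall x y, x \in K -> y \in K ->
         connect [rel u v | [&& e u v, u \in K & v \in K]] x y) &
      (forall x y, x \in K -> y \notin A -> e x y -> y \in K)].

Definition attachments (A K : {set T}) : {set T} :=
  [set y in A | [exists x in K, e x y]].

(* Vertex set of the Tutte bridge of A given by the component K. *)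
Definition bridge_vertices (A K : {set T}) : {set T} := K :|: attachments A K.

Definition subpath_vertices (Q : seq T) (a b : T) : {set T} :=
  [set x in Q | minn (index a Q) (index b Q) <= index x Q <= maxn (index a Q) (index b Q)].

Definition consecutive (s : seq T) (x y : T) : Prop :=
  exists s1 s2, s = s1 ++ x :: y :: s2 \/ s = s1 ++ y :: x :: s2.

(* The graph G[S] contains an induced subdivision of the diamond
   (K4 minus the edge cd, on branch vertices a,b,c,d): each of the five
   diamond edges ab, ac, ad, bc, bd is replaced by a path (with interior
   vertex lists p1..p5, possibly empty), all these vertices are distinct,
   lie in S, and the edges of G among them are exactly the path edges. *)
Definition induced_diamond_subdivision (S : {set T}) : Prop :=
  exists (a b c d : T) (p1 p2 p3 p4 p5 : seq T),
    let P1 := a :: rcons p1 b in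
    let P2 := a :: rcons p2 c in
    let P3 := a :: rcons p3 d in
    let P4 := b :: rcons p4 c in
    let P5 := b :: rcons p5 d in
    let U := a :: b :: c :: d :: p1 ++ p2 ++ p3 ++ p4 ++ p5 in
    [/\ uniq U,
        {subset U <= S} &
        forall x y, x \in U -> y \in U ->
          (e x y <-> (consecutive P1 x y \/ consecutive P2 x y \/
                       consecutive P3 x y \/ consecutive P4 x y \/
                       consecutive P5 x y))].

End Graphs.

(* Main.v *)
Require Import Defs.
From mathcomp Require Import all_boot.
From mathcomp Require Import zify.
Set Implicit Arguments. Unset Strict Implicit. Unset Printing Implicit Defensive.

Section Consec.
Variable T : finType.
Implicit Types (s p q : seq T) (x y u v : T).

Definition cons1 s u v := exists s1 s2, s = s1 ++ u :: v :: s2.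

Lemma consecE s u v : consecutive s u v <-> cons1 s u v \/ cons1 s v u.
Proof.
split.
- by case=> s1 [s2 [->|->]]; [left|right]; exists s1, s2.
- by case=> [[s1 [s2 ->]]|[s1 [s2 ->]]]; exists s1, s2; [left|right].
Qed.

Lemma consec_sym s u v : consecutive s u v -> consecutive s v u.
Proof. by case=> s1 [s2 [->|->]]; exists s1, s2; [right|left]. Qed.

Lemma cons1_1 x u v : ~ cons1 [:: x] u v.
Proof. by case=> s1 [s2 /(congr1 size)]; rewrite size_cat /=; lia. Qed.

Lemma cons1_cons2 x y t u v :
  cons1 [:: x, y & t] u v <-> (x = u /\ y = v) \/ cons1 (y :: t) u v.
Proof.
split.
- case=> [[|z s1] [s2 /=]].
  + by case=> -> -> _; left.
  + by case=> _ H; right; exists s1, s2.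
- case=> [[-> ->]|[s1 [s2 H]]]; first by exists [::], t.
  by exists (x :: s1), s2; rewrite H.
Qed.

Lemma cons1_cat x p q u v :
  cons1 (x :: p ++ q) u v <-> cons1 (x :: p) u v \/ cons1 (last x p :: q) u v.
Proof.
elim: p x => [|y p IH] x /=.
- split; [by right | by case=> // /cons1_1].
- move: (cons1_cons2 x y (p ++ q) u v) (IH y) (cons1_cons2 x y p u v); tauto.
Qed.

Lemma consec_cat x p q u v :
  consecutive (x :: p ++ q) u v <->
  consecutive (x :: p) u v \/ consecutive (last x p :: q) u v.
Proof.
move: (consecE (x :: p ++ q) u v) (consecE (x :: p) u v) (consecE (last x p :: q) u v).
move: (cons1_cat x p q u v) (cons1_cat x p q v u); tauto.
Qed.

Lemma cons1_rev s u v : cons1 s u v -> cons1 (rev s) v u.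
Proof.
case=> s1 [s2 ->]; exists (rev s2), (rev s1).
by rewrite rev_cat !rev_cons -!cats1 -!catA.
Qed.

Lemma consec_rev s u v : consecutive (rev s) u v <-> consecutive s u v.
Proof.
rewrite !consecE; split.
- by case=> /cons1_rev; rewrite revK; tauto.
- by case=> /cons1_rev; tauto.
Qed.

Lemma consec_sub l s r u v : consecutive s u v -> consecutive (l ++ s ++ r) u v.
Proof.
by case=> s1 [s2 [->|->]]; exists (l ++ s1), (s2 ++ r); [left|right]; rewrite -!catA.
Qed.

Lemma consec_mem s u v : consecutive s u v -> u \in s /\ v \in s.
Proof.
by case=> s1 [s2 [->|->]]; rewrite !mem_cat !inE !eqxx !orbT.
Qed.

Lemma cons1_index s u v : uniq s -> cons1 s u v -> (index u s).+1 = index v s.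
Proof.
move=> Us [s1 [s2 E]]; move: Us; rewrite E cat_uniq => /and3P[_ Hn U2].
move: Hn U2; rewrite /= !inE !negb_or => /and3P[us1 vs1 _] /and3P[/andP[uv _] _ _].
rewrite !index_cat (negbTE us1) (negbTE vs1) /= eqxx.
by rewrite (negbTE uv) eqxx; lia.
Qed.

Lemma consec_index s u v : uniq s -> consecutive s u v ->
  (index u s).+1 = index v s \/ (index v s).+1 = index u s.
Proof.
move=> Us /consecE [H|H]; [left|right]; exact: cons1_index H.
Qed.

Lemma consec_of_index s u v : v \in s -> (index u s).+1 = index v s ->
  consecutive s u v.
Proof.
move=> vs Hi.
have us : u \in s by rewrite -index_mem -ltnS Hi ltnS ltnW // index_mem.
exists (take (index u s) s), (drop (index v s).+1 s); left.
rewrite -{1}(cat_take_drop (index u s) s).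
rewrite (drop_nth u) ?index_mem // nth_index //.
by rewrite Hi (drop_nth u) ?index_mem // nth_index.
Qed.

Lemma path_consec (r : rel T) x p u v :
  path r x p -> consecutive (x :: p) u v -> r u v \/ r v u.
Proof.
have H : forall x p u v, path r x p -> cons1 (x :: p) u v -> r u v.
  move=> {}x {}p {u v}; elim: p x => [|y p IH] x u v; first by move=> _ /cons1_1.
  move=> /= /andP[rxy Hp] /cons1_cons2 [[<- <-] // | H]; exact: IH H.
by move=> Hp /consecE [H1|H1]; [left|right]; exact: H Hp H1.
Qed.

End Consec.
Section Chordless.
Variable T : finType.
Variable r : rel T.
Hypothesis rsym : symmetric r.
Hypothesis rirr : irreflexive r.

Lemma split_last (P : pred T) s : has P s ->
  exists s1 y s2, [/\ s = s1 ++ y :: s2, P y & ~~ has P s2].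
Proof.
elim: s => [|z s IH] //= H; case Hs: (has P s).
- have [s1 [y [s2 [-> Py Hn]]]] := IH Hs.
  by exists (z :: s1), y, s2.
- by exists [::], z, s; rewrite Hs orbF in H; rewrite Hs.
Qed.

Definition chordless (s : seq T) :=
  uniq s /\ forall u w, u \in s -> w \in s -> r u w -> consecutive s u w.

Lemma chordless1 x : chordless [:: x].
Proof.
split=> // u w; rewrite !inE => /eqP-> /eqP->; by rewrite rirr.
Qed.

Lemma chordless_exists n x p : size p <= n -> path r x p ->
  exists q, [/\ path r x q, last x q = last x p, {subset q <= p} & chordless (x :: q)].
Proof.
elim: n x p => [|n IH] x p.
  case: p => // _ _; exists [::]; split=> //; exact: chordless1.
case: p => [|y0 p'] Hs Hp.
  exists [::]; split=> //; exact: chordless1.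
set p := y0 :: p' in Hs Hp *.
have hP : has (fun z => r x z || (z == x)) p.
  by rewrite /= ; move: Hp => /= /andP[-> _].
have [s1 [y [s2 [Ep Py Hn]]]] := split_last hP.
have Hs2 : size s2 <= n.
  by move: Hs; rewrite Ep size_cat /=; lia.
have Hp2 : path r y s2 by move: Hp; rewrite Ep cat_path /= => /andP[_ /andP[]].
have Hlast : last x p = last y s2 by rewrite Ep last_cat.
have sub2 : {subset s2 <= p} by move=> z zs; rewrite Ep mem_cat inE zs !orbT.
case/orP: Py => [rxy|/eqP yx].
- have [q2 [Hq2 Lq2 Sq2 [Uq2 Cq2]]] := IH y s2 Hs2 Hp2.
  exists (y :: q2); split.
  + by rewrite /= rxy.
  + by rewrite Hlast /= Lq2.
  + move=> z; rewrite inE => /orP[/eqP->|zq]; last exact/sub2/Sq2.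
    by rewrite Ep mem_cat inE eqxx orbT.
  + have xq2 : forall z, z \in q2 -> ~~ r x z /\ z != x.
      move=> z /Sq2 zs; move/hasPn: Hn => /(_ z zs); rewrite negb_or; by case/andP.
    have xy : x != y by apply/eqP=> E; move: rxy; rewrite E rirr.
    have Hx : forall w, w \in x :: y :: q2 -> r x w -> consecutive [:: x, y & q2] x w.
      move=> w; rewrite !inE => /orP[/eqP->|/orP[/eqP->|wq]].
      * by rewrite rirr.
      * by move=> _; exists [::], q2; left.
      * by case: (xq2 w wq) => /negbTE->.
    split.
    * rewrite /= inE negb_or xy /=; move: Uq2 => /= ->; rewrite andbT; apply/negP=> /xq2 [_]; by rewrite eqxx.
    * move=> u w Hu Hw Huw.
      move: (Hu) (Hw); rewrite inE => /orP[/eqP Eu|Hu'].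
        by move=> _; subst u; exact: Hx.
      rewrite inE => /orP[/eqP Ew|Hw'].
        by subst w; apply: consec_sym; apply: Hx => //; rewrite rsym.
      have := consec_sub [:: x] [::] (Cq2 u w Hu' Hw' Huw).
      by rewrite cats0.
- have Hp2' : path r x s2 by rewrite -yx.
  have [q [Hq Lq Sq Cq]] := IH x s2 Hs2 Hp2'.
  exists q; split=> //.
  + by rewrite Lq Hlast yx.
  + by move=> z /Sq /sub2.
Qed.

End Chordless.
Section Ears.
Variable T : finType.
Variable e : rel T.

Definition ear (Q : seq T) (a b : T) (s : seq T) :=
  [/\ s != [::], uniq s, (forall u, u \in s -> u \notin Q),
      (forall u w, consecutive (a :: rcons s b) u w -> e u w) &
      (forall u w, u \in s -> (w \in Q) || (w \in s) -> e u w ->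
          consecutive (a :: rcons s b) u w)].

Lemma rev_ear_seq (a b : T) s : rev (a :: rcons s b) = b :: rcons (rev s) a.
Proof. by rewrite rev_cons rev_rcons. Qed.

Lemma ear_rev Q a b s : ear Q a b s -> ear Q b a (rev s).
Proof.
case=> [ne U nQ C1 C2]; split.
- by rewrite -size_eq0 size_rev size_eq0.
- by rewrite rev_uniq.
- by move=> u; rewrite mem_rev; exact: nQ.
- by move=> u w; rewrite -rev_ear_seq consec_rev; exact: C1.
- by move=> u w; rewrite !mem_rev -rev_ear_seq => Hu Hw Huw; rewrite consec_rev; exact: C2.
Qed.

Lemma comp_disj (Q : seq T) (K : {set T}) u : component_of_complement e [set x in Q] K -> u \in K -> u \notin Q.
Proof.
case=> _ D _ _ uK; have := disjointFr D uK; by rewrite inE => ->.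
Qed.

Lemma comp_eq (Q : seq T) (K1 K2 : {set T}) v : component_of_complement e [set x in Q] K1 ->
  component_of_complement e [set x in Q] K2 -> v \in K1 -> v \in K2 -> K1 = K2.
Proof.
have sub : forall K1 K2, component_of_complement e [set x in Q] K1 ->
  component_of_complement e [set x in Q] K2 -> v \in K1 -> v \in K2 -> K1 \subset K2.
  move=> {}K1 {}K2 c1 c2 v1 v2; apply/subsetP=> x xK1.
  case: (c1) => _ D1 Con1 _; case: (c2) => _ _ _ Cl2.
  have /connectP [p Hp ->] := Con1 v x v1 xK1.
  suff : all (fun z => z \in K2) (v :: p) by move/allP; apply; exact: mem_last.
  elim: p v v1 v2 Hp {xK1} => [|z p IH] y y1 y2 /=; first by rewrite y2.
  move=> /andP[/and3P[eyz _ zK1] Hp]; rewrite y2 /=.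
  have zK2 : z \in K2 by apply: (Cl2 y z y2) => //; rewrite inE; apply: (comp_disj c1 zK1).
  exact: (IH z zK1 zK2 Hp).
move=> c1 c2 v1 v2; apply/eqP; rewrite eqEsubset; apply/andP; split.
- exact: sub.
- exact: sub.
Qed.

Lemma comp_no_edge (Q : seq T) (K1 K2 : {set T}) u v : component_of_complement e [set x in Q] K1 ->
  component_of_complement e [set x in Q] K2 -> K1 != K2 -> u \in K1 -> v \in K2 -> ~~ e u v.
Proof.
move=> c1 c2 ne uK vK; apply/negP=> euv.
have vK1 : v \in K1.
  case: (c1) => _ _ _ Cl; apply: (Cl u v uK) => //; rewrite inE; exact: (comp_disj c2 vK).
by move: ne; rewrite (comp_eq c1 c2 vK1 vK) eqxx.
Qed.

Lemma comp_disj2 (Q : seq T) (K1 K2 : {set T}) u : component_of_complement e [set x in Q] K1 ->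
  component_of_complement e [set x in Q] K2 -> K1 != K2 -> u \in K1 -> u \notin K2.
Proof.
move=> c1 c2 ne uK; apply/negP=> uK2.
by move: ne; rewrite (comp_eq c1 c2 uK uK2) eqxx.
Qed.

Lemma ear_exists (Q : seq T) (K : {set T}) a b : simple_graph e ->
  component_of_complement e [set x in Q] K -> a != b ->
  attachments e [set x in Q] K = [set a; b] ->
  exists s, ear Q a b s /\ {subset s <= K}.
Proof.
move=> [esym eirr] cK ab HA.
have attP : forall z, z \in [set a; b] -> z \in Q /\ exists2 k, k \in K & e k z.
  move=> z; rewrite -HA inE inE => /andP[zQ /existsP [k /andP[kK ekz]]].
  by split=> //; exists k.
have [aQ [ka kaK ekaa]] := attP a (setU11 _ _).
have [bQ [kb kbK ekbb]] := attP b (setU1r _ (set11 b)).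
have nQ : forall z, z \in K -> z \notin Q by move=> z; exact: comp_disj cK.
have Kna : forall z, z \in K -> z != a by move=> z /nQ zQ; apply/eqP=> E; move: zQ; rewrite E aQ.
have Knb : forall z, z \in K -> z != b by move=> z /nQ zQ; apply/eqP=> E; move: zQ; rewrite E bQ.
case: (cK) => _ _ Con _.
have /connectP [p0 Hp0 Elast] := Con ka kb kaK kbK.
set e' := [rel u v | e u v && ~~ (((u == a) && (v == b)) || ((u == b) && (v == a)))].
have e'sym : symmetric e'.
  move=> u v /=; rewrite esym; congr (_ && ~~ _); rewrite orbC; congr (_ || _); exact: andbC.
have e'irr : irreflexive e' by move=> u /=; rewrite eirr.
have allK : forall y, y \in K -> path [rel u v | [&& e u v, u \in K & v \in K]] y p0 ->
   all (fun z => z \in K) p0 /\ path e' y p0.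
  elim: p0 {Hp0 Elast} => [|z p IH] y yK //= /andP[/and3P[eyz _ zK] Hp].
  have [H1 H2] := IH z zK Hp; rewrite zK H1 H2 eyz /= !andbT.
  by rewrite (negbTE (Kna y yK)) (negbTE (Knb y yK)).
have [p0K Hp0'] := allK ka kaK Hp0.
set p := ka :: rcons p0 b.
have Hp : path e' a p.
  rewrite /= rcons_path Hp0' -Elast /= esym ekaa ekbb eqxx /=.
  by rewrite (negbTE (Kna ka kaK)) (negbTE (Knb ka kaK)) (negbTE (Kna kb kbK)) (negbTE (Knb kb kbK)) /= andbF.
have [q [Hq Lq Sq [Uq Cq]]] := chordless_exists e'sym e'irr (leqnn (size p)) Hp.
have Lq' : last a q = b by rewrite Lq /= last_rcons.
case: q Hq Lq Sq Uq Cq Lq' => [|z q'] Hq _ Sq Uq Cq Lq'.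
  by move: ab; rewrite -Lq' /= eqxx.
rewrite /= in Lq'; move: Hq Sq Uq Cq; rewrite [z :: q']lastI Lq'.
set s := belast z q' => Hq Sq Uq Cq.
have sne : s != [::].
  by apply/eqP=> E; move: Hq; rewrite E /= !eqxx /= andbF.
move: Uq; rewrite /= mem_rcons inE negb_or rcons_uniq => /andP[/andP[ab' aS] /andP[bS Us]].
have sK : {subset s <= K}.
  move=> u us; have : u \in p by apply: Sq; rewrite mem_rcons inE us orbT.
  rewrite /p inE mem_rcons inE => /or3P[/eqP->//|/eqP ub|up0].
    by move: bS; rewrite -ub us.
  exact: (allP p0K).
exists s; split=> //; split=> //.
- by move=> u /sK; exact: nQ.
- move=> u w H; case: (path_consec Hq H) => /andP[euw _] //; by rewrite esym.
- move=> u w us Hw euw.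
  have wE : w \in a :: rcons s b.
    case/orP: Hw => [wQ|ws]; last by rewrite inE mem_rcons inE ws !orbT.
    have : w \in attachments e [set x in Q] K.
      rewrite inE inE wQ /=; apply/existsP; exists u; by rewrite (sK u us) euw.
    by rewrite HA !inE mem_rcons inE => /orP[->|->]; rewrite ?orbT.
  apply: Cq => //; first by rewrite inE mem_rcons inE us !orbT.
  rewrite /= euw /=.
  have ua : u != a by apply/eqP=> E; move: aS; rewrite -E us.
  have ub : u != b by apply/eqP=> E; move: bS; rewrite -E us.
  by rewrite (negbTE ua) (negbTE ub).
Qed.

End Ears.
Section Theta.
Variable T : finType.
Variable e : rel T.

Lemma walk_form (a b : T) p : last a p = b -> 0 < size p -> exists r, p = rcons r b.
Proof. case: p => [|z p] //= <- _; exists (belast z p); exact: lastI. Qed.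

Lemma walk_form2 (a b : T) p : last a p = b -> 1 < size p ->
  exists c t, p = c :: rcons t b.
Proof.
case: p => [|c p] //= H Hs; have [t ->] := walk_form H Hs; by exists c, t.
Qed.

Lemma theta_diamond (S : {set T}) a b p1 p2 p3 L :
  last a p1 = b -> last a p2 = b -> last a p3 = b ->
  0 < size p1 -> 1 < size p2 -> 1 < size p3 ->
  perm_eq (a :: p1 ++ p2 ++ p3) (b :: b :: L) -> uniq L -> {subset L <= S} ->
  (forall u v, u \in L -> v \in L ->
     (e u v <-> consecutive (a :: p1) u v \/ consecutive (a :: p2) u v \/
                consecutive (a :: p3) u v)) ->
  induced_diamond_subdivision e S.
Proof.
move=> L1 L2 L3 S1 S2 S3 Hperm UL SL HE.
have [r1 E1] := walk_form L1 S1.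
have [c [t2 E2]] := walk_form2 L2 S2.
have [d [t3 E3]] := walk_form2 L3 S3.
subst p1 p2 p3.
set U := [:: a, b, c, d & r1 ++ [::] ++ [::] ++ rev t2 ++ rev t3].
have PU : perm_eq U L.
  have H1 : perm_eq (b :: b :: U) (a :: rcons r1 b ++ (c :: rcons t2 b) ++ (d :: rcons t3 b)).
    apply/permP => P; rewrite /U /= !count_cat /= !count_rev -!cats1 !count_cat /= !count_cat /=; lia.
  by rewrite -(perm_cons b) -(perm_cons b) (perm_trans H1).
exists a, b, c, d, r1, [::], [::], (rev t2), (rev t3); cbv zeta; split.
- by rewrite (perm_uniq PU).
- by move=> u; rewrite (perm_mem PU); exact: SL.
- move=> u v Hu Hv; rewrite (perm_mem PU) in Hu; rewrite (perm_mem PU) in Hv.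
  have HB : forall c t, consecutive (a :: c :: rcons t b) u v <->
       consecutive (a :: rcons [::] c) u v \/ consecutive (b :: rcons (rev t) c) u v.
    move=> c' t; rewrite -rev_ear_seq consec_rev.
    exact: (consec_cat a [:: c'] (rcons t b) u v).
  move: (HE u v Hu Hv) (HB c t2) (HB d t3); tauto.
Qed.

End Theta.
Section QDec.
Variable T : finType.

Definition W (Q : seq T) i j := take (j - i) (drop i.+1 Q).

Lemma W_cat Q i j : i <= j -> W Q i j ++ drop j.+1 Q = drop i.+1 Q.
Proof.
rewrite /W => H; rewrite -{2}(cat_take_drop (j - i) (drop i.+1 Q)) drop_drop.
congr (_ ++ drop _ Q); lia.
Qed.

Lemma W_size Q i j : i <= j -> j < size Q -> size (W Q i j) = j - i.
Proof. by move=> H1 H2; rewrite /W size_takel // size_drop; lia. Qed.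

Lemma W_last Q x0 i j : i <= j -> j < size Q -> last (nth x0 Q i) (W Q i j) = nth x0 Q j.
Proof.
move=> H1 H2; case: (ltngtP i j) H1 => // [lt _|<- _]; last by rewrite /W subnn take0.
rewrite -nth_last (W_size (ltnW lt) H2) /W nth_take; last by lia.
rewrite nth_drop; have -> : i.+1 + (j - i).-1 = j by lia.
exact: set_nth_default.
Qed.

Lemma QD (Q : seq T) (a1 a2 y M : T) :
  a1 \in Q -> a2 \in Q -> y \in Q -> M \in Q ->
  index a1 Q <= index a2 Q -> index a2 Q <= index y Q -> index y Q <= index M Q ->
  exists Lq A B C Rq,
   [/\ Q = Lq ++ (a1 :: A ++ B ++ C) ++ Rq, last a1 A = a2, last a2 B = y,
       last y C = M & [/\ size Lq = index a1 Q, size A = index a2 Q - index a1 Q,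
        size B = index y Q - index a2 Q & size C = index M Q - index y Q]].
Proof.
move=> a1Q a2Q yQ MQ h12 h23 h34.
have s4 : index M Q < size Q by rewrite index_mem.
have s3 : index y Q < size Q by rewrite index_mem.
have s2 : index a2 Q < size Q by rewrite index_mem.
have s1 : index a1 Q < size Q by rewrite index_mem.
exists (take (index a1 Q) Q), (W Q (index a1 Q) (index a2 Q)), (W Q (index a2 Q) (index y Q)),
  (W Q (index y Q) (index M Q)), (drop (index M Q).+1 Q); split.
- rewrite /= -!catA !W_cat //.
  by rewrite -{1}(cat_take_drop (index a1 Q) Q) (drop_nth a1) // nth_index.
- by have := W_last a1 h12 s2; rewrite !nth_index.
- by have := W_last a1 h23 s3; rewrite !nth_index.
- by have := W_last a1 h34 s4; rewrite !nth_index.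
- split; first by rewrite size_takel // ltnW.
  all: by rewrite W_size.
Qed.

End QDec.
Section Step1.
Variable T : finType.
Variable e : rel T.

Lemma step1 (Q Lq Qs Rq : seq T) x1 z1 x2 z2 s1 s2 :
  simple_graph e -> induced_path e Q -> Q = Lq ++ Qs ++ Rq ->
  ear e Q x1 z1 s1 -> ear e Q x2 z2 s2 ->
  (forall u v, u \in s1 -> v \in s2 -> ~~ e u v) ->
  forall u v, u \in Qs ++ s1 ++ s2 -> v \in Qs ++ s1 ++ s2 ->
  (e u v <-> consecutive Qs u v \/ consecutive (x1 :: rcons s1 z1) u v \/
             consecutive (x2 :: rcons s2 z2) u v).
Proof.
move=> [esym eirr] [UQ HQ] EQ [_ _ nQ1 C11 C12] [_ _ nQ2 C21 C22] NE u v Hu Hv.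
have QsQ : {subset Qs <= Q} by move=> w ws; rewrite EQ !mem_cat ws orbT.
have idx : forall w, w \in Qs -> index w Q = size Lq + index w Qs.
  move=> w ws; move: (UQ); rewrite {1}EQ cat_uniq => /and3P[_ H _].
  have wL : w \notin Lq by apply: (hasPn H); rewrite mem_cat ws.
  by rewrite EQ index_cat (negbTE wL) index_cat ws.
have UQs : uniq Qs by move: UQ; rewrite EQ !cat_uniq => /and3P[_ _ /andP[]].
split.
- move=> euv; rewrite !mem_cat in Hu Hv.
  case/or3P: Hu => Hu; case/or3P: Hv => Hv.
  + left; move: euv; rewrite HQ ?QsQ // !idx // -!addnS !eqn_add2l.
    case/orP=> /eqP H; [exact: consec_of_index Hv H | apply: consec_sym; exact: consec_of_index Hu H].
  + by right; left; apply: consec_sym; apply: C12 => //; rewrite ?QsQ // esym.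
  + by right; right; apply: consec_sym; apply: C22 => //; rewrite ?QsQ // esym.
  + by right; left; apply: C12 => //; rewrite QsQ.
  + by right; left; apply: C12 => //; rewrite Hv orbT.
  + by move: (NE u v Hu Hv); rewrite euv.
  + by right; right; apply: C22 => //; rewrite QsQ.
  + by move: (NE v u Hv Hu); rewrite esym euv.
  + by right; right; apply: C22 => //; rewrite Hv orbT.
- case=> [H|[H|H]].
  + have [uQs vQs] := consec_mem H.
    rewrite HQ ?QsQ // !idx // -!addnS !eqn_add2l.
    by case: (consec_index UQs H) => ->; rewrite eqxx ?orbT.
  + exact: C11.
  + exact: C21.
Qed.

End Step1.
Section Core.
Variable T : finType.
Variable e : rel T.

Lemma revwalk (x : T) s : rev (x :: s) = last x s :: rev (belast x s).
Proof. by rewrite [x :: s]lastI rev_rcons. Qed.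

Lemma revwalk_last (x : T) s : last (last x s) (rev (belast x s)) = x.
Proof.
transitivity (last x (rev (x :: s))); first by rewrite revwalk.
by rewrite rev_cons last_rcons.
Qed.

Lemma idx_seg (Lq Qs Rq : seq T) w : uniq (Lq ++ Qs ++ Rq) -> w \in Qs ->
  index w (Lq ++ Qs ++ Rq) = size Lq + index w Qs.
Proof.
move=> U ws; move: U; rewrite cat_uniq => /and3P[_ H _].
have wL : w \notin Lq by apply: (hasPn H); rewrite mem_cat ws.
by rewrite index_cat (negbTE wL) index_cat ws.
Qed.

Lemma core_L (Q Lq Qs Rq : seq T) a1 b1 a2 b2 s1 s2 (S : {set T}) :
  uniq Q -> Q = Lq ++ Qs ++ Rq -> ear e Q a1 b1 s1 -> ear e Q a2 b2 s2 ->
  (forall u, u \in s1 -> u \notin s2) -> {subset Qs <= S} -> {subset s1 <= S} ->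
  {subset s2 <= S} -> uniq (Qs ++ s1 ++ s2) /\ {subset Qs ++ s1 ++ s2 <= S}.
Proof.
move=> UQ EQ [_ U1 nQ1 _ _] [_ U2 nQ2 _ _] D SQ S1 S2.
have QsQ : {subset Qs <= Q} by move=> w ws; rewrite EQ !mem_cat ws orbT.
split.
- rewrite !cat_uniq U1 U2 /= !andbT; apply/and3P; split.
  + by move: UQ; rewrite EQ !cat_uniq => /and3P[_ _ /andP[]].
  + apply/hasPn=> w; rewrite mem_cat => /orP[] ws; apply/negP=> /QsQ.
      by apply/negP; exact: nQ1.
    by apply/negP; exact: nQ2.
  + apply/hasPn=> w ws; apply/negP=> w1; by move: (D w w1); rewrite ws.
- by move=> w; rewrite !mem_cat => /or3P[]; [exact: SQ|exact: S1|exact: S2].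
Qed.

Lemma core (Q : seq T) a1 b1 a2 b2 s1 s2 (S : {set T}) :
  simple_graph e -> induced_path e Q ->
  a1 \in Q -> b1 \in Q -> a2 \in Q -> b2 \in Q ->
  index a1 Q <= index a2 Q -> index a2 Q < index b1 Q -> index a2 Q < index b2 Q ->
  ear e Q a1 b1 s1 -> ear e Q a2 b2 s2 ->
  (forall u v, u \in s1 -> v \in s2 -> ~~ e u v) -> (forall u, u \in s1 -> u \notin s2) ->
  (forall x, x \in Q -> index a1 Q <= index x Q <= maxn (index b1 Q) (index b2 Q) -> x \in S) ->
  {subset s1 <= S} -> {subset s2 <= S} ->
  induced_diamond_subdivision e S.
Proof.
move=> sg ip a1Q b1Q a2Q b2Q h1 h2 h3 E1 E2 NE D12 SQ S1 S2.
have UQ : uniq Q by case: ip.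
have [ne1 _ _ _ _] := E1; have [ne2 _ _ _ _] := E2.
have sz1 : 0 < size s1 by rewrite lt0n size_eq0.
have sz2 : 0 < size s2 by rewrite lt0n size_eq0.
case: (leqP (index b2 Q) (index b1 Q)) => hb.
-
  have [Lq [A [B [C [Rq [EQ LA LB LC [zL zA zB zC]]]]]]] :=
    QD a1Q a2Q b2Q b1Q h1 (ltnW h3) hb.
  set Qs := a1 :: A ++ B ++ C.
  have SQs : {subset Qs <= S}.
    move=> x xs; have xQ : x \in Q by rewrite EQ !mem_cat xs orbT.
    apply: SQ => //; have U : uniq (Lq ++ Qs ++ Rq) by rewrite -EQ.
    have ix := idx_seg U xs; rewrite -EQ in ix; rewrite ix.
    have hx : index x Qs < size Qs by rewrite index_mem.
    have sQ : size Qs = (size A + size B + size C).+1 by rewrite /Qs /= !size_cat addnA.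
    rewrite zL; move: hx; rewrite sQ zA zB zC; clear -h1 h2 h3 hb; lia.
  have [UL SL] := core_L UQ EQ E1 E2 D12 SQs S1 S2.
  apply: (@theta_diamond _ e S a2 b2 B (rcons s2 b2)
     (rev (belast a1 A) ++ rcons s1 b1 ++ rev (belast b2 C)) (Qs ++ s1 ++ s2)) => //.
  + by rewrite last_rcons.
  + by rewrite !last_cat last_rcons -LC revwalk_last.
  + by rewrite zB; clear -h2 h3; lia.
  + by rewrite size_rcons.
  + rewrite !size_cat size_rcons; move: sz1 (size (rev (belast a1 A))) (size (rev (belast b2 C))); move: (size s1) => n hn k1 k2; clear -hn; lia.
  + apply/permP=> P.
    have FA := congr1 (count P) (revwalk a1 A); rewrite count_rev LA /= in FA.
    have FC := congr1 (count P) (revwalk b2 C); rewrite count_rev LC /= in FC.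
    rewrite /Qs /= !count_cat /= -!cats1 !count_cat /= ?count_cat /=; clear -FA FC; lia.
  + move=> u v Hu Hv.
    have St := step1 sg ip EQ E1 E2 NE Hu Hv.
    have QA : consecutive Qs u v <-> consecutive (a1 :: A) u v \/
        consecutive (a2 :: B) u v \/ consecutive (b2 :: C) u v.
      have := consec_cat a1 A (B ++ C) u v; have := consec_cat a2 B C u v.
      rewrite LA LB; tauto.
    have RA : consecutive (a2 :: rev (belast a1 A)) u v <-> consecutive (a1 :: A) u v.
      by rewrite -LA -revwalk consec_rev.
    have RC : consecutive (b1 :: rev (belast b2 C)) u v <-> consecutive (b2 :: C) u v.
      by rewrite -LC -revwalk consec_rev.
    have P3 : consecutive (a2 :: rev (belast a1 A) ++ rcons s1 b1 ++ rev (belast b2 C)) u v <->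
        consecutive (a2 :: rev (belast a1 A)) u v \/ consecutive (a1 :: rcons s1 b1) u v \/
        consecutive (b1 :: rev (belast b2 C)) u v.
      have := consec_cat a2 (rev (belast a1 A)) (rcons s1 b1 ++ rev (belast b2 C)) u v.
      have := consec_cat a1 (rcons s1 b1) (rev (belast b2 C)) u v.
      have HL : last a2 (rev (belast a1 A)) = a1 by rewrite -LA revwalk_last.
      rewrite HL last_rcons; tauto.
    move: St QA RA RC P3; tauto.
-
  have [Lq [A [B [C [Rq [EQ LA LB LC [zL zA zB zC]]]]]]] :=
    QD a1Q a2Q b1Q b2Q h1 (ltnW h2) (ltnW hb).
  set Qs := a1 :: A ++ B ++ C.
  have SQs : {subset Qs <= S}.
    move=> x xs; have xQ : x \in Q by rewrite EQ !mem_cat xs orbT.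
    apply: SQ => //; have U : uniq (Lq ++ Qs ++ Rq) by rewrite -EQ.
    have ix := idx_seg U xs; rewrite -EQ in ix; rewrite ix.
    have hx : index x Qs < size Qs by rewrite index_mem.
    have sQ : size Qs = (size A + size B + size C).+1 by rewrite /Qs /= !size_cat addnA.
    rewrite zL; move: hx; rewrite sQ zA zB zC; clear -h1 h2 h3 hb; lia.
  have [UL SL] := core_L UQ EQ E1 E2 D12 SQs S1 S2.
  apply: (@theta_diamond _ e S a2 b1 B (rcons s2 b2 ++ rev (belast b1 C))
     (rev (belast a1 A) ++ rcons s1 b1) (Qs ++ s1 ++ s2)) => //.
  + by rewrite last_cat last_rcons -LC revwalk_last.
  + by rewrite last_cat last_rcons.
  + by rewrite zB; clear -h2 h3; lia.
  + rewrite size_cat size_rcons; move: sz2 (size (rev (belast b1 C))); move: (size s2) => n hn k; clear -hn; lia.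
  + rewrite !size_cat size_rcons; move: sz1 (size (rev (belast a1 A))); move: (size s1) => n hn k; clear -hn; lia.
  + apply/permP=> P.
    have FA := congr1 (count P) (revwalk a1 A); rewrite count_rev LA /= in FA.
    have FC := congr1 (count P) (revwalk b1 C); rewrite count_rev LC /= in FC.
    rewrite /Qs /= !count_cat /= -!cats1 !count_cat /= ?count_cat /=; clear -FA FC; lia.
  + move=> u v Hu Hv.
    have St := step1 sg ip EQ E1 E2 NE Hu Hv.
    have QA : consecutive Qs u v <-> consecutive (a1 :: A) u v \/
        consecutive (a2 :: B) u v \/ consecutive (b1 :: C) u v.
      have := consec_cat a1 A (B ++ C) u v; have := consec_cat a2 B C u v.
      rewrite LA LB; tauto.
    have RA : consecutive (a2 :: rev (belast a1 A)) u v <-> consecutive (a1 :: A) u v.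
      by rewrite -LA -revwalk consec_rev.
    have RC : consecutive (b2 :: rev (belast b1 C)) u v <-> consecutive (b1 :: C) u v.
      by rewrite -LC -revwalk consec_rev.
    have P2 : consecutive (a2 :: rcons s2 b2 ++ rev (belast b1 C)) u v <->
        consecutive (a2 :: rcons s2 b2) u v \/ consecutive (b2 :: rev (belast b1 C)) u v.
      by have := consec_cat a2 (rcons s2 b2) (rev (belast b1 C)) u v; rewrite last_rcons.
    have P3 : consecutive (a2 :: rev (belast a1 A) ++ rcons s1 b1) u v <->
        consecutive (a2 :: rev (belast a1 A)) u v \/ consecutive (a1 :: rcons s1 b1) u v.
      have := consec_cat a2 (rev (belast a1 A)) (rcons s1 b1) u v.
      have HL : last a2 (rev (belast a1 A)) = a1 by rewrite -LA revwalk_last.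
      by rewrite HL.
    move: St QA RA RC P2 P3; tauto.
Qed.

End Core.
Section Main.
Variable T : finType.

Lemma subpath_sym (Q : seq T) a b : subpath_vertices Q a b = subpath_vertices Q b a.
Proof. by rewrite /subpath_vertices minnC maxnC. Qed.

Lemma in_subpath (Q : seq T) a b x : x \in Q -> index a Q <= index x Q <= index b Q ->
  x \in subpath_vertices Q a b.
Proof.
move=> xQ /andP[h1 h2]; rewrite inE xQ /=; apply/andP; split.
- exact: leq_trans (geq_minl _ _) h1.
- exact: leq_trans h2 (leq_maxr _ _).
Qed.

Lemma subpath_idx (Q : seq T) a b x : index a Q < index b Q ->
  x \in subpath_vertices Q a b -> index a Q <= index x Q <= index b Q.
Proof.
move=> hab; rewrite inE => /andP[_].
by rewrite (minn_idPl (ltnW hab)) (maxn_idPr (ltnW hab)).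
Qed.

Lemma orient (e : rel T) (Q : seq T) a b s : ear e Q a b s -> a \in Q -> b \in Q -> a != b ->
  exists a' b' s', [/\ ear e Q a' b' s', s' =i s, a' \in Q, b' \in Q &
     index a' Q < index b' Q /\ subpath_vertices Q a' b' = subpath_vertices Q a b].
Proof.
move=> E aQ bQ ab; case: (ltngtP (index a Q) (index b Q)) => H.
- by exists a, b, s; split.
- exists b, a, (rev s); split=> //; [exact: ear_rev | exact: mem_rev | split=> //; exact: subpath_sym].
- by move: ab; rewrite -(nth_index a aQ) H nth_index // eqxx.
Qed.

End Main.

Theorem mainTheorem19 (T : finType) (e : rel T) (Q : seq T)
  (K1 K2 : {set T}) (a1 b1 a2 b2 : T) :
  simple_graph e ->
  induced_path e Q ->
  component_of_complement e [set x in Q] K1 ->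
  component_of_complement e [set x in Q] K2 ->
  K1 != K2 ->
  a1 != b1 -> attachments e [set x in Q] K1 = [set a1; b1] ->
  a2 != b2 -> attachments e [set x in Q] K2 = [set a2; b2] ->
  (exists x y, [/\ x \in Q, y \in Q, (index x Q).+1 = index y Q,
      x \in subpath_vertices Q a1 b1 :&: subpath_vertices Q a2 b2 &
      y \in subpath_vertices Q a1 b1 :&: subpath_vertices Q a2 b2]) ->
  induced_diamond_subdivision e
    (bridge_vertices e [set x in Q] K1 :|: bridge_vertices e [set x in Q] K2
     :|: subpath_vertices Q a1 b1 :|: subpath_vertices Q a2 b2).
Proof.
move=> sg ip c1 c2 K12 ab1 A1 ab2 A2 [x [y [xQ yQ ixy Hx Hy]]].
have attQ : forall (K : {set T}) a b, attachments e [set x in Q] K = [set a; b] ->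
    a \in Q /\ b \in Q.
  move=> K a b HA; have : a \in attachments e [set x in Q] K by rewrite HA !inE eqxx.
  have : b \in attachments e [set x in Q] K by rewrite HA !inE eqxx orbT.
  by rewrite !inE => /andP[-> _] /andP[-> _].
have [a1Q b1Q] := attQ _ _ _ A1; have [a2Q b2Q] := attQ _ _ _ A2.
have [s1 [E1 s1K]] := ear_exists sg c1 ab1 A1.
have [s2 [E2 s2K]] := ear_exists sg c2 ab2 A2.
have [a1' [b1' [s1' [E1' Es1 a1Q' b1Q' [h1 Esp1]]]]] := orient E1 a1Q b1Q ab1.
have [a2' [b2' [s2' [E2' Es2 a2Q' b2Q' [h2 Esp2]]]]] := orient E2 a2Q b2Q ab2.
rewrite -Esp1 -Esp2 in Hx Hy *.
set S := (X in induced_diamond_subdivision e X).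
move: Hx Hy => /setIP[Hx1 Hx2] /setIP[Hy1 Hy2].
have bx1 := subpath_idx h1 Hx1; have bx2 := subpath_idx h2 Hx2.
have by1 := subpath_idx h1 Hy1; have by2 := subpath_idx h2 Hy2.
have [esym _] := sg.
have NE : forall u v, u \in s1' -> v \in s2' -> ~~ e u v.
  move=> u v; rewrite Es1 Es2 => /s1K u1 /s2K v2; exact: comp_no_edge c1 c2 K12 u1 v2.
have D : forall u, u \in s1' -> u \notin s2'.
  move=> u; rewrite Es1 Es2 => /s1K u1; apply/negP=> /s2K u2.
  by move: (comp_disj2 c1 c2 K12 u1); rewrite u2.
have S1 : {subset s1' <= S}.
  move=> u; rewrite Es1 => /s1K uK.
  by apply/setUP; left; apply/setUP; left; apply/setUP; left; apply/setUP; left.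
have S2 : {subset s2' <= S}.
  move=> u; rewrite Es2 => /s2K uK.
  by apply/setUP; left; apply/setUP; left; apply/setUP; right; apply/setUP; left.
have SP1 : forall z, z \in Q -> index a1' Q <= index z Q <= index b1' Q -> z \in S.
  by move=> z zQ hz; apply/setUP; left; apply/setUP; right; exact: in_subpath.
have SP2 : forall z, z \in Q -> index a2' Q <= index z Q <= index b2' Q -> z \in S.
  by move=> z zQ hz; apply/setUP; right; exact: in_subpath.
move: bx1 bx2 by1 by2; rewrite -ixy => /andP[l1 u1] /andP[l2 u2] /andP[l3 u3] /andP[l4 u4].
case: (leqP (index a1' Q) (index a2' Q)) => ha.
- apply: (core sg ip a1Q' b1Q' a2Q' b2Q' ha _ _ E1' E2' NE D) => //.
  + exact: leq_ltn_trans l2 u3.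
  + move=> z zQ /andP[hz1 hz2]; case: (leqP (index z Q) (index b1' Q)) => hz.
      by apply: SP1 => //; rewrite hz1 hz.
    apply: SP2 => //; apply/andP; split.
      by apply: (leq_trans l2); apply: (leq_trans (ltnW u3)); exact: ltnW hz.
    by clear -hz hz2; lia.
- have NE' : forall u v, u \in s2' -> v \in s1' -> ~~ e u v.
    by move=> u v Hu Hv; rewrite esym; exact: NE.
  have D' : forall u, u \in s2' -> u \notin s1'.
    by move=> u Hu; apply/negP=> Hu'; move: (D u Hu'); rewrite Hu.
  apply: (core sg ip a2Q' b2Q' a1Q' b1Q' (ltnW ha) _ _ E2' E1' NE' D') => //.
  + exact: leq_ltn_trans l1 u4.
  + move=> z zQ /andP[hz1 hz2]; case: (leqP (index z Q) (index b2' Q)) => hz.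
      by apply: SP2 => //; rewrite hz1 hz.
    apply: SP1 => //; apply/andP; split.
      by apply: (leq_trans l1); apply: (leq_trans (ltnW u4)); exact: ltnW hz.
    by clear -hz hz2; lia.
Qed.
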